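(* Every consistent theory $x$ can be extended to a maximal consistent theory $y\supseteq x$.
   Context: Fix a finite set $A$ of agents and a countable set $P$ of propositional variables. The language $\mathcal{L}_{CoRGAL}$ is given by $\varphi ::= p \mid \neg\varphi \mid (\varphi\wedge\varphi) \mid K_a\varphi \mid [\varphi]\varphi \mid [G,\varphi]\varphi \mid [\langle G\rangle]\varphi$ with $p\in P$, $a\in A$, $G\subseteq A$. $\mathcal{L}_{EL}$ is the fragment built only from $p,\neg,\wedge,K_a$. Duals: $\langle\psi\rangle\varphi:=\neg[\psi]\neg\varphi$, $\langle G,\psi\rangle\varphi:=\neg[G,\psi]\neg\varphi$. $\mathcal{L}^G_{EL}$ is the set of formulas $\bigwedge_{i\in G}K_i\varphi_i$ with $\varphi_i\in\mathcal{L}_{EL}$; $\psi_G$ ranges over it. Necessity forms: $\eta ::= \sharp \mid \varphi\to\eta(\sharp)\mid K_a\eta(\sharp)\mid[\varphi]\eta(\sharp)$; $\sharp$ occurs exactly once and $\eta(\varphi)$ is the result of replacing $\sharp$ by $\varphi$. $\mathbf{CoRGAL}$ is the smallest set of formulas containing all instances of: (A0) propositional tautologies; (A1) $K_a(\varphi\to\psi)\to(K_a\varphi\to K_a\psi)$; (A2) $K_a\varphi\to\varphi$; (A3) $K_a\varphi\to K_aK_a\varphi$; (A4) $\neg K_a\varphi\to K_a\neg K_a\varphi$; (A5) $[\varphi]p\leftrightarrow(\varphi\to p)$; (A6) $[\varphi]\neg\psi\leftrightarrow(\varphi\to\neg[\varphi]\psi)$; (A7) $[\varphi](\psi\wedge\chi)\leftrightarrow([\varphi]\psi\wedge[\varphi]\chi)$;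 (A8) $[\varphi]K_a\psi\leftrightarrow(\varphi\to K_a[\varphi]\psi)$; (A9) $[\varphi][\psi]\chi\leftrightarrow[\varphi\wedge[\varphi]\psi]\chi$; (A10) $[G,\chi]\varphi\to\chi\wedge[\psi_G\wedge\chi]\varphi$ for any $\psi_G$; (A11) $[\langle G\rangle]\varphi\to\langle A\setminus G,\psi_G\rangle\varphi$ for any $\psi_G$; and closed under: (R0) modus ponens; (R1) from $\varphi$ infer $K_a\varphi$; (R2) from $\varphi$ infer $[\psi]\varphi$; (R3) from $\varphi$ infer $[G,\chi]\varphi$; (R4) from $\varphi$ infer $[\langle G\rangle]\varphi$; (R5) from $\eta(\chi\wedge[\psi_G\wedge\chi]\varphi)$ for all $\psi_G$ infer $\eta([G,\chi]\varphi)$; (R6) from $\eta(\langle A\setminus G,\psi_G\rangle\varphi)$ for all $\psi_G$ infer $\eta([\langle G\rangle]\varphi)$. A theory is a set of formulas containing $\mathbf{CoRGAL}$ and closed under (R0), (R5), (R6). A theory $x$ is consistent iff $\bot\notin x$, and maximal iff for every formula $\varphi$, $\varphi\in x$ or $\neg\varphi\in x$. *)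

(* Defs.v *)
From mathcomp Require Import all_boot.
Set Implicit Arguments.
Unset Strict Implicit.
Unset Printing Implicit Defensive.

Section CoRGAL.
Variable Agent : finType.

Inductive form : Type :=
| Var : nat -> form
| Neg : form -> form
| And : form -> form -> form
| K : Agent -> form -> form
| Ann : form -> form -> form                 (* [phi]psi *)
| GAnn : {set Agent} -> form -> form -> form (* [G,chi]phi *)
| CAnn : {set Agent} -> form -> form.        (* [<G>]phi *)

Definition Imp (a b : form) : form := Neg (And a (Neg b)).
Definition Iff (a b : form) : form := And (Imp a b) (Imp b a).
Definition Top : form := Imp (Var 0) (Var 0).
Definition Bot : form := Neg Top.
Definition DAnn (a b : form) : form := Neg (Ann a (Neg b)).
Definition DGAnn (G : {set Agent}) (c a : form) : form := Neg (GAnn G c (Neg a)).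

Fixpoint isEL (f : form) : bool :=
  match f with
  | Var _ => true
  | Neg a => isEL a
  | And a b => isEL a && isEL b
  | K _ a => isEL a
  | _ => false
  end.

Definition bigAnd (l : seq form) : form :=
  match l with
  | [::] => Top
  | a :: l' => foldl And a l'
  end.
Definition psiG (G : {set Agent}) (phi : Agent -> form) : form :=
  bigAnd [seq K i (phi i) | i <- enum G].
Definition ELfam (phi : Agent -> form) : Prop := forall i, isEL (phi i).

Inductive nform : Type :=
| NHole : nform
| NImp : form -> nform -> nform
| NK : Agent -> nform -> nform
| NAnn : form -> nform -> nform.

Fixpoint nfill (e : nform) (f : form) : form :=
  match e with
  | NHole => f
  | NImp a e' => Imp a (nfill e' f)
  | NK i e' => K i (nfill e' f)
  | NAnn a e' => Ann a (nfill e' f)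
  end.

(* propositional tautology instances: true under every boolean assignment to
   the maximal non-boolean subformulas (atoms and modal/announcement formulas) *)
Fixpoint peval (v : form -> bool) (f : form) : bool :=
  match f with
  | Neg a => ~~ peval v a
  | And a b => peval v a && peval v b
  | _ => v f
  end.
Definition ptaut (f : form) : Prop := forall v, peval v f = true.

Inductive CoRGAL : form -> Prop :=
| A0 f : ptaut f -> CoRGAL f
| A1 a f g : CoRGAL (Imp (K a (Imp f g)) (Imp (K a f) (K a g)))
| A2 a f : CoRGAL (Imp (K a f) f)
| A3 a f : CoRGAL (Imp (K a f) (K a (K a f)))
| A4 a f : CoRGAL (Imp (Neg (K a f)) (K a (Neg (K a f))))
| A5 f p : CoRGAL (Iff (Ann f (Var p)) (Imp f (Var p)))
| A6 f g : CoRGAL (Iff (Ann f (Neg g)) (Imp f (Neg (Ann f g))))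
| A7 f g h : CoRGAL (Iff (Ann f (And g h)) (And (Ann f g) (Ann f h)))
| A8 f a g : CoRGAL (Iff (Ann f (K a g)) (Imp f (K a (Ann f g))))
| A9 f g h : CoRGAL (Iff (Ann f (Ann g h)) (Ann (And f (Ann f g)) h))
| A10 G c f phi : ELfam phi ->
    CoRGAL (Imp (GAnn G c f) (And c (Ann (And (psiG G phi) c) f)))
| A11 G f phi : ELfam phi ->
    CoRGAL (Imp (CAnn G f) (DGAnn (~: G) (psiG G phi) f))
| R0 f g : CoRGAL (Imp f g) -> CoRGAL f -> CoRGAL g
| R1 a f : CoRGAL f -> CoRGAL (K a f)
| R2 g f : CoRGAL f -> CoRGAL (Ann g f)
| R3 G c f : CoRGAL f -> CoRGAL (GAnn G c f)
| R4 G f : CoRGAL f -> CoRGAL (CAnn G f)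
| R5 e G c f :
    (forall phi, ELfam phi -> CoRGAL (nfill e (And c (Ann (And (psiG G phi) c) f)))) ->
    CoRGAL (nfill e (GAnn G c f))
| R6 e G f :
    (forall phi, ELfam phi -> CoRGAL (nfill e (DGAnn (~: G) (psiG G phi) f))) ->
    CoRGAL (nfill e (CAnn G f)).

Definition theory (x : form -> Prop) : Prop :=
  (forall f, CoRGAL f -> x f) /\
  (forall f g, x (Imp f g) -> x f -> x g) /\
  (forall e G c f,
     (forall phi, ELfam phi -> x (nfill e (And c (Ann (And (psiG G phi) c) f)))) ->
     x (nfill e (GAnn G c f))) /\
  (forall e G f,
     (forall phi, ELfam phi -> x (nfill e (DGAnn (~: G) (psiG G phi) f))) ->
     x (nfill e (CAnn G f))).

Definition consistent (x : form -> Prop) : Prop := ~ x Bot.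
Definition maximal (x : form -> Prop) : Prop := forall f, x f \/ x (Neg f).

End CoRGAL.

(* Main.v *)
From Stdlib Require Import ClassicalEpsilon Classical.
Require Import Defs.
From mathcomp Require Import all_boot.

Set Implicit Arguments.
Unset Strict Implicit.
Unset Printing Implicit Defensive.

Section Lind.
Variable Agent : finType.
Notation F := (form Agent).
Notation NF := (nform Agent).

Inductive item : Type :=
| IF : F -> item
| I5 : NF -> {set Agent} -> F -> F -> item
| I6 : NF -> {set Agent} -> F -> item.

Definition LT : Type := ((nat + Agent) + {set Agent})%type.
Notation tr := (GenTree.tree LT).

Fixpoint encF (f : F) : tr :=
  match f with
  | Var n => GenTree.Node 0 [:: GenTree.Leaf (inl (inl n))]
  | Neg a => GenTree.Node 1 [:: encF a]
  | And a b => GenTree.Node 2 [:: encF a; encF b]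
  | K i a => GenTree.Node 3 [:: GenTree.Leaf (inl (inr i)); encF a]
  | Ann a b => GenTree.Node 4 [:: encF a; encF b]
  | GAnn G c a => GenTree.Node 5 [:: GenTree.Leaf (inr G); encF c; encF a]
  | CAnn G a => GenTree.Node 6 [:: GenTree.Leaf (inr G); encF a]
  end.

Fixpoint decF (t : tr) : option F :=
  match t with
  | GenTree.Node 0 [:: GenTree.Leaf (inl (inl n))] => Some (Var _ n)
  | GenTree.Node 1 [:: a] =>
      match decF a with Some a' => Some (Neg a') | _ => None end
  | GenTree.Node 2 [:: a; b] =>
      match decF a, decF b with Some a', Some b' => Some (And a' b') | _, _ => None end
  | GenTree.Node 3 [:: GenTree.Leaf (inl (inr i)); a] =>
      match decF a with Some a' => Some (K i a') | _ => None end
  | GenTree.Node 4 [:: a; b] =>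
      match decF a, decF b with Some a', Some b' => Some (Ann a' b') | _, _ => None end
  | GenTree.Node 5 [:: GenTree.Leaf (inr G); a; b] =>
      match decF a, decF b with Some a', Some b' => Some (GAnn G a' b') | _, _ => None end
  | GenTree.Node 6 [:: GenTree.Leaf (inr G); a] =>
      match decF a with Some a' => Some (CAnn G a') | _ => None end
  | _ => None
  end.

Lemma decFK f : decF (encF f) = Some f.
Proof. by elim: f => //= [a -> | a -> b -> | i a -> | a -> b -> | G a -> b -> | G a ->]. Qed.

Fixpoint encN (e : NF) : tr :=
  match e with
  | NHole => GenTree.Node 10 [::]
  | NImp a e' => GenTree.Node 11 [:: encF a; encN e']
  | NK i e' => GenTree.Node 12 [:: GenTree.Leaf (inl (inr i)); encN e']
  | NAnn a e' => GenTree.Node 13 [:: encF a; encN e']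
  end.

Fixpoint decN (t : tr) : option NF :=
  match t with
  | GenTree.Node 10 [::] => Some (NHole _)
  | GenTree.Node 11 [:: a; b] =>
      match decF a, decN b with Some a', Some b' => Some (NImp a' b') | _, _ => None end
  | GenTree.Node 12 [:: GenTree.Leaf (inl (inr i)); b] =>
      match decN b with Some b' => Some (NK i b') | _ => None end
  | GenTree.Node 13 [:: a; b] =>
      match decF a, decN b with Some a', Some b' => Some (NAnn a' b') | _, _ => None end
  | _ => None
  end.

Lemma decNK e : decN (encN e) = Some e.
Proof. by elim: e => //= [a e -> | i e -> | a e ->]; rewrite ?decFK. Qed.

Definition encI (i : item) : tr :=
  match i with
  | IF f => GenTree.Node 20 [:: encF f]
  | I5 e G c f => GenTree.Node 21 [:: encN e; GenTree.Leaf (inr G); encF c; encF f]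
  | I6 e G f => GenTree.Node 22 [:: encN e; GenTree.Leaf (inr G); encF f]
  end.

Definition decI (t : tr) : option item :=
  match t with
  | GenTree.Node 20 [:: a] =>
      match decF a with Some a' => Some (IF a') | _ => None end
  | GenTree.Node 21 [:: e; GenTree.Leaf (inr G); c; f] =>
      match decN e, decF c, decF f with
      | Some e', Some c', Some f' => Some (I5 e' G c' f') | _, _, _ => None end
  | GenTree.Node 22 [:: e; GenTree.Leaf (inr G); f] =>
      match decN e, decF f with
      | Some e', Some f' => Some (I6 e' G f') | _, _ => None end
  | _ => None
  end.

Lemma decIK i : decI (encI i) = Some i.
Proof. by case: i => /= *; rewrite ?decFK ?decNK. Qed.

Definition enumI (n : nat) : option item := obind decI (unpickle n).

Lemma enumI_enc i : enumI (pickle (encI i)) = Some i.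
Proof. by rewrite /enumI pickleK /= decIK. Qed.

Lemma enumI_surj i : exists m, enumI m = Some i.
Proof. by exists (pickle (encI i)); exact: enumI_enc. Qed.

Ltac taut := let v := fresh "v" in intro v; try unfold Imp; try unfold Bot; try unfold Top; simpl;
  repeat (match goal with |- context [peval v ?a] => destruct (peval v a) end);
  try destruct (v (Var _ 0)); reflexivity.

Lemma T1 (f a : F) : ptaut (Imp f (Imp a f)). Proof. taut. Qed.
Lemma T2 (a f g : F) : ptaut (Imp (Imp a (Imp f g)) (Imp (Imp a f) (Imp a g))). Proof. taut. Qed.
Lemma T3 (a : F) : ptaut (Imp a a). Proof. taut. Qed.
Lemma T4 (a : F) : ptaut (Imp (Imp a (Bot _)) (Neg a)). Proof. taut. Qed.
Lemma T6 (b : F) : ptaut (Imp (Imp (Neg b) (Bot _)) b). Proof. taut. Qed.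
Lemma T7 (b : F) : ptaut (Imp b (Imp (Neg b) (Bot _))). Proof. taut. Qed.

Section Th.
Variable x : F -> Prop.
Hypothesis hx : theory x.

Lemma th_C f : CoRGAL f -> x f. Proof. by case: hx => h _; apply: h. Qed.
Lemma th_MP f g : x (Imp f g) -> x f -> x g. Proof. by case: hx => _ [h _]; apply: h. Qed.
Lemma th_t1 a b : ptaut (Imp a b) -> x a -> x b.
Proof. by move=> H; apply: th_MP; apply: th_C; apply: A0. Qed.
Lemma th_t2 a b c : ptaut (Imp a (Imp b c)) -> x a -> x b -> x c.
Proof. by move=> H ha; apply: th_MP; apply: th_t1 H ha. Qed.

Definition ext (a : F) : F -> Prop := fun f => x (Imp a f).

Lemma ext_theory a : theory (ext a).
Proof.
case: hx => hC [hMP [h5 h6]]; split; [|split; [|split]].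
- by move=> f cf; apply: th_t1 (T1 f a) (hC _ cf).
- by move=> f g h1 h2; apply: th_t2 (T2 a f g) h1 h2.
- by move=> e G c f H; apply: (h5 (NImp a e)).
- by move=> e G f H; apply: (h6 (NImp a e)).
Qed.

Lemma ext_sup a f : x f -> ext a f.
Proof. exact: th_t1 (T1 f a). Qed.

Lemma ext_self a : ext a a.
Proof. exact: th_C (A0 (T3 a)). Qed.
End Th.

Definition stepW (x : F -> Prop) (t : F) (W : (Agent -> F) -> F) : F -> Prop :=
  match excluded_middle_informative (x (Imp t (Bot _))) with
  | right _ => ext x t
  | left _ =>
      match excluded_middle_informative
              (exists phi, ELfam phi /\ ~ x (Imp (Neg (W phi)) (Bot _))) with
      | left H => ext x (Neg (W (proj1_sig (constructive_indefinite_description _ H))))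
      | right _ => x
      end
  end.

Lemma stepW_spec x t W : theory x -> consistent x ->
  ((forall phi, ELfam phi -> x (W phi)) -> x t) ->
  [/\ theory (stepW x t W), consistent (stepW x t W),
      (forall f, x f -> stepW x t W f) &
      (stepW x t W t \/ exists phi, ELfam phi /\ stepW x t W (Neg (W phi)))].
Proof.
move=> hx cx cl; rewrite /stepW.
case: excluded_middle_informative => [Ht|Ht].
- case: excluded_middle_informative => [H|H].
  + case: (constructive_indefinite_description _ H) => phi [Hel Hc] /=.
    split; [exact: ext_theory | exact: Hc | exact: ext_sup | ].
    by right; exists phi; split => //; apply: ext_self.
  + exfalso; apply: cx.
    have xt : x t.
      apply: cl => phi Hel; apply: (th_t1 hx (T6 (W phi))).
      apply: NNPP => Hn; apply: H; by exists phi.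
    exact: (th_t2 hx (T7 t) xt (th_t1 hx (T4 t) Ht)).
- split; [exact: ext_theory | exact: Ht | exact: ext_sup | ].
  by left; apply: ext_self.
Qed.

Definition stepF (x : F -> Prop) (f : F) : F -> Prop :=
  match excluded_middle_informative (x (Imp f (Bot _))) with
  | left _ => ext x (Neg f)
  | right _ => ext x f
  end.

Lemma stepF_spec x f : theory x -> consistent x ->
  [/\ theory (stepF x f), consistent (stepF x f),
      (forall g, x g -> stepF x f g) & (stepF x f f \/ stepF x f (Neg f))].
Proof.
move=> hx cx; rewrite /stepF.
case: excluded_middle_informative => [Ht|Ht].
- split; [exact: ext_theory | | exact: ext_sup | by right; apply: ext_self].
  move=> hb; apply: cx; exact: (th_MP hx hb (th_t1 hx (T4 f) Ht)).
- split; [exact: ext_theory | exact: Ht | exact: ext_sup | by left; apply: ext_self].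
Qed.

Definition Aw (G : {set Agent}) (c f : F) (phi : Agent -> F) : F :=
  And c (Ann (And (psiG G phi) c) f).
Definition Bw (G : {set Agent}) (f : F) (phi : Agent -> F) : F :=
  DGAnn (~: G) (psiG G phi) f.

Definition step (x : F -> Prop) (o : option item) : F -> Prop :=
  match o with
  | None => x
  | Some (IF f) => stepF x f
  | Some (I5 e G c f) => stepW x (nfill e (GAnn G c f)) (fun phi => nfill e (Aw G c f phi))
  | Some (I6 e G f) => stepW x (nfill e (CAnn G f)) (fun phi => nfill e (Bw G f phi))
  end.

Lemma step_ok x o : theory x -> consistent x ->
  [/\ theory (step x o), consistent (step x o) & (forall f, x f -> step x o f)].
Proof.
move=> hx cx; case: o => [[f|e G c f|e G f]|] /=.
- by case: (stepF_spec f hx cx).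
- have := @stepW_spec x (nfill e (GAnn G c f)) (fun phi => nfill e (Aw G c f phi)) hx cx.
  case; first by case: hx => _ [_ [h5 _]]; apply: h5.
  by [].
- have := @stepW_spec x (nfill e (CAnn G f)) (fun phi => nfill e (Bw G f phi)) hx cx.
  case; first by case: hx => _ [_ [_ h6]]; apply: h6.
  by [].
- by [].
Qed.

Fixpoint ch (x : F -> Prop) (n : nat) : F -> Prop :=
  match n with 0 => x | n'.+1 => step (ch x n') (enumI n') end.

Section Ch.
Variable x : F -> Prop.
Hypothesis hx : theory x.
Hypothesis cx : consistent x.

Lemma ch_ok n : theory (ch x n) /\ consistent (ch x n).
Proof.
elim: n => [|n [h1 h2]] //=.
by case: (step_ok (enumI n) h1 h2).
Qed.

Lemma ch_mono n m f : n <= m -> ch x n f -> ch x m f.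
Proof.
elim: m => [|m IH]; first by rewrite leqn0 => /eqP ->.
rewrite leq_eqVlt => /orP [/eqP -> //|]; rewrite ltnS => Hle Hf.
have H := IH Hle Hf.
case: (ch_ok m) => h1 h2; case: (step_ok (enumI m) h1 h2) => _ _ Hs.
exact: Hs.
Qed.

Lemma ch_S n : ch x n.+1 = step (ch x n) (enumI n). Proof. by []. Qed.

Definition Y : F -> Prop := fun f => exists n, ch x n f.

Lemma Y_join f g : Y f -> Y g -> exists n, ch x n f /\ ch x n g.
Proof.
move=> [n hn] [m hm]; exists (maxn n m); split.
- by apply: ch_mono hn; rewrite leq_maxl.
- by apply: ch_mono hm; rewrite leq_maxr.
Qed.

Lemma Y_cons : consistent Y.
Proof. by move=> [n hn]; case: (ch_ok n) => _; apply. Qed.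

Lemma Y_noboth b : Y b -> Y (Neg b) -> False.
Proof.
move=> h1 h2; case: (Y_join h1 h2) => n [a1 a2].
case: (ch_ok n) => h c; apply: c; exact: (th_t2 h (T7 b) a1 a2).
Qed.

Lemma ch5 m e G c f : enumI m = Some (I5 e G c f) ->
  ch x m.+1 (nfill e (GAnn G c f)) \/
  exists phi, ELfam phi /\ ch x m.+1 (Neg (nfill e (Aw G c f phi))).
Proof.
move=> Hm; rewrite ch_S Hm /=.
case: (ch_ok m) => h1 h2.
have cl : (forall phi, ELfam phi -> ch x m (nfill e (Aw G c f phi))) ->
          ch x m (nfill e (GAnn G c f)).
  by case: h1 => _ [_ [h5 _]]; apply: h5.
by case: (stepW_spec h1 h2 cl).
Qed.

Lemma ch6 m e G f : enumI m = Some (I6 e G f) ->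
  ch x m.+1 (nfill e (CAnn G f)) \/
  exists phi, ELfam phi /\ ch x m.+1 (Neg (nfill e (Bw G f phi))).
Proof.
move=> Hm; rewrite ch_S Hm /=.
case: (ch_ok m) => h1 h2.
have cl : (forall phi, ELfam phi -> ch x m (nfill e (Bw G f phi))) ->
          ch x m (nfill e (CAnn G f)).
  by case: h1 => _ [_ [_ h6]]; apply: h6.
by case: (stepW_spec h1 h2 cl).
Qed.

Lemma chF m f : enumI m = Some (IF f) -> ch x m.+1 f \/ ch x m.+1 (Neg f).
Proof.
move=> Hm; rewrite ch_S Hm /=.
case: (ch_ok m) => h1 h2.
by case: (stepF_spec f h1 h2).
Qed.

Lemma Y_theory : theory Y.
Proof.
split; [|split; [|split]].
- by move=> f cf; exists 0; apply: (th_C hx).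
- move=> f g h1 h2; case: (Y_join h1 h2) => n [a1 a2]; exists n.
  by case: (ch_ok n) => h _; exact: (th_MP h a1 a2).
- move=> e G c f Hall.
  have [m Hm] := enumI_surj (I5 e G c f).
  case: (ch5 Hm) => [Ht|[phi [Hel Hn]]].
  + by exists m.+1; exact: Ht.
  + exfalso; apply: (Y_noboth (Hall phi Hel)); exists m.+1; exact: Hn.
- move=> e G f Hall.
  have [m Hm] := enumI_surj (I6 e G f).
  case: (ch6 Hm) => [Ht|[phi [Hel Hn]]].
  + by exists m.+1; exact: Ht.
  + exfalso; apply: (Y_noboth (Hall phi Hel)); exists m.+1; exact: Hn.
Qed.

Lemma Y_max : maximal Y.
Proof.
move=> f; have [m Hm] := enumI_surj (IF f).
case: (chF Hm) => H; [left|right]; exists m.+1; exact: H.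
Qed.
End Ch.
End Lind.

Theorem mainTheorem12 (Agent : finType) (x : form Agent -> Prop) :
  theory x -> consistent x ->
  exists y : form Agent -> Prop,
    (forall f, x f -> y f) /\ theory y /\ consistent y /\ maximal y.
Proof.
move=> hx cx; exists (Y x); split; first by move=> f hf; exists 0.
split; first exact: Y_theory.
split; first exact: Y_cons.
exact: Y_max.
Qed.
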